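(* Consider the seven lines of a Fano plane, each carrying an orientation, and fix a reference orientation for each line. Let $P$ be the set of lines whose orientation agrees with the reference and $R$ the set of lines whose orientation is reversed, with $N(P)+N(R)=7$. For a line $l_1$, the operation $\mathrm{PL}(l_1)$ reverses the orientation of each of the six lines other than $l_1$ and leaves the orientation of $l_1$ unchanged. After performing $\mathrm{PL}(l_1)$: if $l_1\in P$ then the new count is $N(R)=N(P)-1$ (with $N(P)$ the count before the operation), and if $l_1\in R$ then the new count is $N(R)=N(P)+1$. Consequently, starting from a presentation with $N(R)=0$ (standard Type I box-kite), $N(R)=2$ (standard Type II box-kite), $N(R)=6$ (explosion of a Type I), or $N(R)\in\{4,6\}$ (explosion of a Type II), any subsequent operation $\mathrm{PL}(l_2)$ yields a presentation with $N(R)$ even.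
   Context: Here the Fano plane presentation is that of a box-kite: seven nodes (six L-indices $a,\dots,f$ and the strut constant $S$ in the center) and seven lines (the trips), each oriented by its cyclic positive order of multiplication of the corresponding Cayley–Dickson basis units. The reference orientation is that of a standard Type I box-kite. $\mathrm{PL}(l)$ is the operation of adding a new high power of two $g$ to the four nodes not on the line $l$ (which, by Rule 2 of the Cayley–Dickson sign conventions, reverses exactly the six lines other than $l$). *)

(* Defs.v *)
From mathcomp Require Import all_boot.
Set Implicit Arguments. Unset Strict Implicit. Unset Printing Implicit Defensive.

(* The seven lines of the Fano plane are indexed by 'I_7.  (For reference,
   line i is the triple {i, i+1, i+3} mod 7 of the standard Fano plane.)
   An orientation of each line is recorded RELATIVE to a fixed reference
   orientation: [o l = true] means line l is reversed w.r.t. the reference,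
   [o l = false] means it agrees with the reference. *)
Definition fano_line := 'I_7.

Definition fano_points (l : fano_line) : seq nat :=
  [:: val l; (val l + 1) %% 7; (val l + 3) %% 7].

Definition orientation := {ffun fano_line -> bool}.

Definition Pset (o : orientation) : {set fano_line} := [set l | ~~ o l].
Definition Rset (o : orientation) : {set fano_line} := [set l | o l].

Definition PL (l1 : fano_line) (o : orientation) : orientation :=
  [ffun m => if m == l1 then o m else ~~ o m].

(* Main.v *)
Require Import Defs.
From mathcomp Require Import all_boot.

Lemma cardPR (o : orientation) : (#|Pset o| + #|Rset o| = 7)%N.
Proof.
have -> : Pset o = ~: Rset o by apply/setP=> x; rewrite !inE.
by rewrite addnC cardsC card_ord.
Qed.

Lemma RPL_P l (o : orientation) : l \in Pset o -> Rset (PL l o) = Pset o :\ l.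
Proof.
rewrite inE => hl; apply/setP=> m; rewrite !inE ffunE.
by case: eqP => [->|]; [rewrite (negbTE hl)|].
Qed.

Lemma RPL_R l (o : orientation) : l \in Rset o -> Rset (PL l o) = l |: Pset o.
Proof.
rewrite inE => hl; apply/setP=> m; rewrite !inE ffunE.
by case: eqP => [->|].
Qed.

Theorem lemma3 (o : orientation) :
  (forall l1 : fano_line, l1 \in Pset o ->
      #|Rset (PL l1 o)| = (#|Pset o| - 1)%N) /\
  (forall l1 : fano_line, l1 \in Rset o ->
      #|Rset (PL l1 o)| = (#|Pset o| + 1)%N) /\
  (#|Rset o| \in [:: 0; 2; 6; 4]%N ->
      forall l2 : fano_line, ~~ odd #|Rset (PL l2 o)|).
Proof.
have A : forall l1 : fano_line, l1 \in Pset o ->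
      #|Rset (PL l1 o)| = (#|Pset o| - 1)%N.
  by move=> l hl; rewrite RPL_P // (cardsD1 l (Pset o)) hl add1n subn1.
have B : forall l1 : fano_line, l1 \in Rset o ->
      #|Rset (PL l1 o)| = (#|Pset o| + 1)%N.
  move=> l hl; rewrite RPL_R // cardsU1 addnC.
  by move: hl; rewrite !inE => ->.
split; [exact A|split; [exact B|]].
move=> hr l; have hc := cardPR o.
have hodd : odd #|Pset o|.
  move: hr hc; rewrite !inE; move: #|Pset o| #|Rset o| => n m.
  move=> h /(congr1 odd); rewrite oddD /=.
  by case/or4P: h => /eqP -> /=; rewrite ?addbF ?addbT => ->.
case hl: (l \in Pset o).
- rewrite A //; move: hodd hl; case: #|Pset o| => [|n] //=.
  by rewrite subn1 /= => ? _.
- have hR : l \in Rset o by move: hl; rewrite !inE => /negbFE.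
  by rewrite B // addn1 /= hodd.
Qed.
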